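(* If $G$ is the $3\times 3$, $3\times 5$, or $4\times 4$ square lattice graph $P_m\times P_n$, then $T_1(G)=3$.
   Context: $P_m\times P_n$ is the Cartesian product of paths on $m$ and $n$ vertices (the $m\times n$ square lattice graph). Fix a set $\Sigma$ of symbols (bond-edge types) and a disjoint copy $\hat\Sigma=\{\hat a:a\in\Sigma\}$ with $\hat{\hat a}=a$; elements of $\Sigma\cup\hat\Sigma$ are cohesive-end types. A tile is a finite multiset of cohesive-end types. A pot is a finite set $P$ of tiles such that whenever $x$ occurs in a tile of $P$, $\hat x$ occurs in some tile of $P$; $\#P$ is its number of tiles. Graphs are finite, loops and multiple edges allowed. An assembly design of a graph $H$ labels the half-edges of $H$ by cohesive-end types so that the two half-edges of each edge receive complementary labels $x,\hat x$; $t_v$ is the multiset of labels at $v$, $P_\lambda(H)=\{t_v\}$, and $P$ realizes $H$ ($H\in\mathcal{O}(P)$) if some assembly design $\lambda$ has $P_\lambda(H)\subseteq P$. $T_1(G)=\min\{\#P: G\in\mathcal{O}(P)\}$. *)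

(* Defs.v *)
From mathcomp Require Import all_boot.
From mathcomp Require Import finmap multiset.

Set Implicit Arguments.
Unset Strict Implicit.
Unset Printing Implicit Defensive.

Local Open Scope fset_scope.

(* Bond-edge types Sigma := nat (an unlimited supply of symbols);
   cohesive-end types are Sigma + hat(Sigma), encoded as (a, false) = a and
   (a, true) = hat a. *)
Definition cet := (nat * bool)%type.
Definition hat (x : cet) : cet := (x.1, ~~ x.2).

Definition tile := {mset cet}%mset.

Definition is_pot (P : {fset tile}) : Prop :=
  forall (t : tile) (x : cet), t \in P -> x \in t ->
    exists2 t' : tile, t' \in P & hat x \in t'.

(* Finite simple graphs: a finType of vertices with a symmetric irreflexive
   adjacency relation.  A half-edge at v of the edge {v,w} is the ordered pair
   (v,w) with adj v w. *)
Definition simple_graph (V : finType) (adj : rel V) : Prop :=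
  irreflexive adj /\ symmetric adj.

Definition assembly_design (V : finType) (adj : rel V) (lam : V -> V -> cet)
  : Prop := forall v w, adj v w -> lam w v = hat (lam v w).

Definition tile_at (V : finType) (adj : rel V) (lam : V -> V -> cet) (v : V)
  : tile := seq_mset [seq lam v w | w <- enum V & adj v w].

Definition realizes (P : {fset tile}) (V : finType) (adj : rel V) : Prop :=
  exists lam : V -> V -> cet,
    assembly_design adj lam /\ forall v : V, tile_at adj lam v \in P.

Definition T1_eq (V : finType) (adj : rel V) (k : nat) : Prop :=
  (exists P : {fset tile}, [/\ is_pot P, realizes P adj & #|` P| = k]) /\
  (forall P : {fset tile}, is_pot P -> realizes P adj -> k <= #|` P|).

Definition grid_adj (m n : nat) : rel ('I_m * 'I_n) :=
  fun u v =>
    ((u.1 == v.1 :> nat) && ((u.2.+1 == v.2 :> nat) || (v.2.+1 == u.2 :> nat)))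
 || ((u.2 == v.2 :> nat) && ((u.1.+1 == v.1 :> nat) || (v.1.+1 == u.1 :> nat))).
Arguments grid_adj : clear implicits.

(* Main.v *)
Require Import Defs.
From mathcomp Require Import all_boot.
From mathcomp Require Import finmap multiset.

Local Open Scope fset_scope.

Lemma in_seq_mset (s : seq cet) (x : cet) : (x \in seq_mset s) = (x \in s).
Proof. exact: perm_mem (perm_eq_seq_mset s) x. Qed.

Lemma size_tile_at (V : finType) (adj : rel V) lam v :
  size (enum_mset (tile_at adj lam v)) = size [seq w <- enum V | adj v w].
Proof. by rewrite /tile_at (perm_size (perm_eq_seq_mset _)) size_map. Qed.

Lemma lower (V : finType) (adj : rel V) (v2 v3 v4 : V) (P : {fset tile}) :
  size [seq w <- enum V | adj v2 w] = 2 ->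
  size [seq w <- enum V | adj v3 w] = 3 ->
  size [seq w <- enum V | adj v4 w] = 4 ->
  realizes P adj -> 3 <= #|` P|.
Proof.
move=> h2 h3 h4 [lam [_ Hin]].
have s2 := size_tile_at _ adj lam v2; have s3 := size_tile_at _ adj lam v3.
have s4 := size_tile_at _ adj lam v4.
have -> : 3 = size [:: tile_at adj lam v2; tile_at adj lam v3; tile_at adj lam v4] by [].
apply: uniq_leq_size.
  have ne : forall a b : tile, size (enum_mset a) != size (enum_mset b) -> a != b.
    by move=> a b; apply: contra => /eqP ->.
  rewrite [uniq _]/= !inE negb_or.
  have n23 : size (enum_mset (tile_at adj lam v2)) != size (enum_mset (tile_at adj lam v3)) by rewrite s2 s3 h2 h3.
  have n24 : size (enum_mset (tile_at adj lam v2)) != size (enum_mset (tile_at adj lam v4)) by rewrite s2 s4 h2 h4.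
  have n34 : size (enum_mset (tile_at adj lam v3)) != size (enum_mset (tile_at adj lam v4)) by rewrite s3 s4 h3 h4.
  apply/and3P; split => //; [apply/andP; split|]; [exact: ne n23|exact: ne n24|exact: ne n34].
move=> t; rewrite inE; case/orP; first by move/eqP => ->; exact: Hin.
rewrite inE; case/orP; first by move/eqP => ->; exact: Hin.
rewrite inE; move/eqP => ->; exact: Hin.
Qed.

Lemma mem31 (K : choiceType) (a b c : K) : a \in [fset a; b; c].
Proof. by rewrite !inE eqxx. Qed.
Lemma mem32 (K : choiceType) (a b c : K) : b \in [fset a; b; c].
Proof. by rewrite !inE eqxx ?orbT. Qed.
Lemma mem33 (K : choiceType) (a b c : K) : c \in [fset a; b; c].
Proof. by rewrite !inE eqxx ?orbT. Qed.
Lemma mem3P (K : choiceType) (x a b c : K) : x \in [fset a; b; c] -> [\/ x = a, x = b | x = c].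
Proof. by rewrite !inE => /orP [/orP [] | ] /eqP ->; [apply: Or31|apply: Or32|apply: Or33]. Qed.
Lemma card3 (K : choiceType) (a b c : K) : #|` [fset a; b; c]| <= 3.
Proof.
apply: (leq_trans (leq_card_fsetU _ _)).
by rewrite cardfs2 cardfs1; case: (a != b).
Qed.

Lemma upper (V : finType) (adj : rel V) (lam : V -> V -> cet) (s1 s2 s3 : seq cet) :
  [forall v, forall w, adj v w ==> (lam w v == hat (lam v w))] ->
  [forall v, has (perm_eq [seq lam v w | w <- enum V & adj v w]) [:: s1; s2; s3]] ->
  realizes [fset seq_mset s1; seq_mset s2; seq_mset s3] adj.
Proof.
move=> /forallP A /forallP B; exists lam; split.
  by move=> v w h; have /forallP/(_ w)/implyP/(_ h)/eqP := A v.
move=> v; have := B v; rewrite [has _ _]/= orbF.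
case/or3P => /eq_seq_msetP E.
- have -> : tile_at adj lam v = seq_mset s1 by exact: E.
  exact (@mem31 _ (seq_mset s1) (seq_mset s2) (seq_mset s3)).
- have -> : tile_at adj lam v = seq_mset s2 by exact: E.
  exact (@mem32 _ (seq_mset s1) (seq_mset s2) (seq_mset s3)).
- have -> : tile_at adj lam v = seq_mset s3 by exact: E.
  exact (@mem33 _ (seq_mset s1) (seq_mset s2) (seq_mset s3)).
Qed.


Definition tab33 : seq (nat*nat*nat*nat*bool) := [:: (0,0,1,0,false); (0,0,0,1,false); (0,1,1,1,false); (0,1,0,2,true); (0,2,1,2,false); (1,0,2,0,true); (1,0,1,1,false); (1,1,2,1,true); (1,1,1,2,true); (1,2,2,2,true); (2,0,2,1,false); (2,1,2,2,true)].
Definition tab35 : seq (nat*nat*nat*nat*bool) := [:: (0,0,1,0,false); (0,0,0,1,false); (0,1,1,1,false); (0,1,0,2,true); (0,2,1,2,true); (0,2,0,3,true); (0,3,1,3,true); (0,3,0,4,true); (0,4,1,4,false); (1,0,2,0,true); (1,0,1,1,false); (1,1,2,1,false); (1,1,1,2,false); (1,2,2,2,false); (1,2,1,3,true); (1,3,2,3,true); (1,3,1,4,true); (1,4,2,4,true); (2,0,2,1,false); (2,1,2,2,false); (2,2,2,3,false); (2,3,2,4,true)].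
Definition tab44 : seq (nat*nat*nat*nat*bool) := [:: (0,0,1,0,false); (0,0,0,1,false); (0,1,1,1,false); (0,1,0,2,true); (0,2,1,2,true); (0,2,0,3,true); (0,3,1,3,false); (1,0,2,0,false); (1,0,1,1,true); (1,1,2,1,false); (1,1,1,2,true); (1,2,2,2,true); (1,2,1,3,true); (1,3,2,3,true); (2,0,3,0,true); (2,0,2,1,false); (2,1,3,1,false); (2,1,2,2,false); (2,2,3,2,true); (2,2,2,3,false); (2,3,3,3,true); (3,0,3,1,false); (3,1,3,2,false); (3,2,3,3,true)].

Definition look (tab : seq (nat*nat*nat*nat*bool)) (a b c d : nat) : cet :=
  match [seq e.2 | e <- tab & e.1 == (a,b,c,d)] with
  | x :: _ => (0, x)
  | [::] => match [seq e.2 | e <- tab & e.1 == (c,d,a,b)] with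
            | x :: _ => (0, ~~ x)
            | [::] => (0, false)
            end
  end.

Definition glam m n tab (v w : 'I_m * 'I_n) : cet :=
  look tab v.1 v.2 w.1 w.2.

Definition ca : cet := (0, false).
Definition cb : cet := (0, true).

Lemma pot3 (s1 s2 s3 : seq cet) :
  all (fun x => has (fun s => hat x \in s) [:: s1; s2; s3]) (s1 ++ s2 ++ s3) ->
  is_pot [fset seq_mset s1; seq_mset s2; seq_mset s3].
Proof.
move=> /allP H t x /(@mem3P _ t _ _ _) Ht.
have Hx : forall s, t = seq_mset s -> x \in t -> x \in s.
  by move=> s -> ; rewrite in_seq_mset.
have Hh : forall y, y \in s1 ++ s2 ++ s3 ->
    exists2 t' : tile, t' \in [fset seq_mset s1; seq_mset s2; seq_mset s3] & hat y \in t'.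
  move=> y /H; rewrite /= orbF => /or3P [] hy.
  - exists (seq_mset s1); first exact (@mem31 _ (seq_mset s1) (seq_mset s2) (seq_mset s3)).
    by rewrite in_seq_mset.
  - exists (seq_mset s2); first exact (@mem32 _ (seq_mset s1) (seq_mset s2) (seq_mset s3)).
    by rewrite in_seq_mset.
  - exists (seq_mset s3); first exact (@mem33 _ (seq_mset s1) (seq_mset s2) (seq_mset s3)).
    by rewrite in_seq_mset.
move=> xt; apply: Hh; rewrite !mem_cat.
by case: Ht => E; have := Hx _ E xt => ->; rewrite ?orbT.
Qed.

Definition oget n i : option 'I_n :=
  (if i < n as b return (i < n = b -> option 'I_n)
   then fun h => Some (Ordinal h) else fun _ => None) (erefl (i < n)).

Lemma oget_insub n i : oget n i = insub i.
Proof.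
rewrite /oget; case: insubP => [u hu hv | hn].
  suff H : forall b (e : (i < n) = b),
    (if b as b' return ((i < n) = b' -> option 'I_n)
     then fun h => Some (Ordinal h) else fun _ => None) e = Some u by exact: H.
  move=> [] e; first by congr Some; apply: val_inj.
  by move: e; rewrite hu.
suff H : forall b (e : (i < n) = b),
  (if b as b' return ((i < n) = b' -> option 'I_n)
   then fun h => Some (Ordinal h) else fun _ => None) e = None by exact: H.
by move=> [] e //; move: hn; rewrite e.
Qed.

Definition ordl n : seq 'I_n := pmap (oget n) (iota 0 n).

Lemma mem_ordl n (i : 'I_n) : i \in ordl n.
Proof.
have -> : ordl n = ord_enum n by rewrite /ordl /ord_enum; apply: eq_pmap => x; exact: oget_insub.
exact: mem_ord_enum.
Qed.

Definition gl m n : seq ('I_m * 'I_n) := [seq (i, j) | i <- ordl m, j <- ordl n].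

Lemma mem_gl m n (v : 'I_m * 'I_n) : v \in gl m n.
Proof. by case: v => i j; apply/allpairsP; exists (i, j); rewrite /= !mem_ordl. Qed.

Lemma T1_3 (V : finType) (adj : rel V) (lam : V -> V -> cet) (s1 s2 s3 : seq cet)
  (l : seq V) (v2 v3 v4 : V) :
  (forall v, v \in l) -> uniq l ->
  size [seq w <- l | adj v2 w] = 2 ->
  size [seq w <- l | adj v3 w] = 3 ->
  size [seq w <- l | adj v4 w] = 4 ->
  all (fun x => has (fun s => hat x \in s) [:: s1; s2; s3]) (s1 ++ s2 ++ s3) ->
  all (fun v => all (fun w => adj v w ==> (lam w v == hat (lam v w))) l) l ->
  all (fun v => has (perm_eq [seq lam v w | w <- l & adj v w]) [:: s1; s2; s3]) l ->
  T1_eq adj 3.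
Proof.
move=> Hl Hu h2 h3 h4 hp hA hB.
have Pl : perm_eq l (enum V).
  by apply: uniq_perm => //; [exact: enum_uniq | move=> v; rewrite Hl mem_enum].
have Pf : forall v, perm_eq [seq w <- l | adj v w] [seq w <- enum V | adj v w].
  by move=> v; apply: perm_filter.
have Sz : forall v, size [seq w <- enum V | adj v w] = size [seq w <- l | adj v w].
  by move=> v; apply/esym/perm_size.
rewrite -Sz in h2; rewrite -Sz in h3; rewrite -Sz in h4.
have hA' : [forall v, forall w, adj v w ==> (lam w v == hat (lam v w))].
  apply/forallP => v; apply/forallP => w.
  by have /allP/(_ w (Hl w)) := allP hA v (Hl v).
have hB' : [forall v, has (perm_eq [seq lam v w | w <- enum V & adj v w]) [:: s1; s2; s3]].
  apply/forallP => v; have := allP hB v (Hl v).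
  have /permPl E := perm_map (lam v) (Pf v).
  by rewrite (eq_has E).
split; last first.
  by move=> P _ R; exact: (@lower _ _ _ _ _ _ h2 h3 h4 R).
have R := @upper _ _ _ _ _ _ hA' hB'.
exists [fset seq_mset s1; seq_mset s2; seq_mset s3]; split.
- exact: pot3.
- exact: R.
- apply/eqP; rewrite eqn_leq (@lower _ _ _ _ _ _ h2 h3 h4 R) andbT.
  exact (@card3 _ (seq_mset s1) (seq_mset s2) (seq_mset s3)).
Qed.

Theorem proposition6 (m n : nat) :
  (m, n) \in [:: (3, 3); (3, 5); (4, 4)] ->
  T1_eq (grid_adj m n) 3.
Proof.
rewrite !inE => /or3P [] /eqP [-> ->].
- apply: (@T1_3 _ _ (glam 3 3 tab33) [:: ca; ca] [:: ca; cb; cb] [:: cb; cb; cb; cb]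
     (gl 3 3) (@Ordinal 3 0 isT, @Ordinal 3 0 isT) (@Ordinal 3 0 isT, @Ordinal 3 1 isT)
     (@Ordinal 3 1 isT, @Ordinal 3 1 isT) (@mem_gl 3 3)); by vm_compute.
- apply: (@T1_3 _ _ (glam 3 5 tab35) [:: ca; ca] [:: ca; cb; cb] [:: ca; ca; cb; cb]
     (gl 3 5) (@Ordinal 3 0 isT, @Ordinal 5 0 isT) (@Ordinal 3 0 isT, @Ordinal 5 1 isT)
     (@Ordinal 3 1 isT, @Ordinal 5 1 isT) (@mem_gl 3 5)); by vm_compute.
- apply: (@T1_3 _ _ (glam 4 4 tab44) [:: ca; ca] [:: ca; cb; cb] [:: ca; ca; cb; cb]
     (gl 4 4) (@Ordinal 4 0 isT, @Ordinal 4 0 isT) (@Ordinal 4 0 isT, @Ordinal 4 1 isT)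
     (@Ordinal 4 1 isT, @Ordinal 4 1 isT) (@mem_gl 4 4)); by vm_compute.
Qed.
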